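(* If $G\subset\mathbb{R}^2$ is (the open domain bounded by) a rhombus with smallest angle $\alpha\in(0,\pi/2]$, then \[ P(G)=\frac{1}{\sin\frac{\alpha}{2}}. \]
   Context: For four distinct points $a,b,c,d\in\mathbb{R}^2$ set $p(a,b,c,d)=\frac{|a-b||c-d|+|a-d||b-c|}{|a-c||b-d|}$. For a domain $D$ whose boundary is a Jordan curve, $P(D)=\sup p(a,b,c,d)$ over all distinct $a,b,c,d\in\partial D$ occurring in this order when $\partial D$ is traversed in the positive direction. *)

(* Defs.v *)
From Stdlib Require Import Reals.
Open Scope R_scope.

Definition pt : Type := (R * R)%type.

Definition padd (p q : pt) : pt := (fst p + fst q, snd p + snd q).

Definition dist2 (p q : pt) : R :=
  sqrt ((fst p - fst q) ^ 2 + (snd p - snd q) ^ 2).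

Definition vnorm (u : pt) : R := sqrt (fst u ^ 2 + snd u ^ 2).
Definition vdot (u v : pt) : R := fst u * fst v + snd u * snd v.
Definition vdet (u v : pt) : R := fst u * snd v - snd u * fst v.

Definition pq (a b c d : pt) : R :=
  (dist2 a b * dist2 c d + dist2 a d * dist2 b c) / (dist2 a c * dist2 b d).

Definition lerp (p q : pt) (t : R) : pt :=
  (fst p + t * (fst q - fst p), snd p + t * (snd q - snd p)).

Definition quad_path (v0 v1 v2 v3 : pt) (t : R) : pt :=
  if Rlt_dec t 1 then lerp v0 v1 t
  else if Rlt_dec t 2 then lerp v1 v2 (t - 1)
  else if Rlt_dec t 3 then lerp v2 v3 (t - 2)
  else lerp v3 v0 (t - 3).

(* Boundary of the rhombus with vertices a, a+e1, a+e1+e2, a+e2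
   (with |e1| = |e2|, vdet e1 e2 > 0 this order is counterclockwise,
   i.e. the positive direction). *)
Definition rhombus_path (a e1 e2 : pt) (t : R) : pt :=
  quad_path a (padd a e1) (padd (padd a e1) e2) (padd a e2) t.

(* a,b,c,d are distinct points of the curve gamma (on [0,4)) occurring in this
   order along the positive traversal (up to the choice of starting point,
   which is handled by allowing any increasing parameters in [0,4)). *)
Definition in_order_on (gamma : R -> pt) (a b c d : pt) : Prop :=
  a <> b /\ a <> c /\ a <> d /\ b <> c /\ b <> d /\ c <> d /\
  exists t1 t2 t3 t4 : R,
    0 <= t1 /\ t1 < t2 /\ t2 < t3 /\ t3 < t4 /\ t4 < 4 /\
    gamma t1 = a /\ gamma t2 = b /\ gamma t3 = c /\ gamma t4 = d.

Definition p_values (gamma : R -> pt) (x : R) : Prop :=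
  exists a b c d : pt, in_order_on gamma a b c d /\ x = pq a b c d.

(* Main.v *)
Require Import Defs.
From Stdlib Require Import Reals Lra Lia Psatz ZArith.
Open Scope R_scope.


Definition sub (p q : pt) : pt := (fst p - fst q, snd p - snd q).
Definition ang (u v : pt) : R := acos (vdot u v / (vnorm u * vnorm v)).

Lemma vnorm_sq u : vnorm u * vnorm u = fst u ^ 2 + snd u ^ 2.
Proof. unfold vnorm. apply sqrt_sqrt. nra. Qed.

Lemma vnorm_ge0 u : 0 <= vnorm u.
Proof. unfold vnorm. apply sqrt_pos. Qed.

Lemma sq_pos_neq x y : x <> y -> 0 < (x - y) ^ 2.
Proof. intros H. assert (x - y <> 0) by lra. nra. Qed.

Lemma neq_norm (a b : pt) : a <> b -> 0 < vnorm (sub b a).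
Proof.
  intros H. unfold vnorm, sub; cbn [fst snd]. apply sqrt_lt_R0.
  destruct a as [a1 a2], b as [b1 b2]; cbn [fst snd].
  destruct (Req_dec b1 a1) as [E1|E1].
  - destruct (Req_dec b2 a2) as [E2|E2].
    + subst. exfalso; apply H; reflexivity.
    + pose proof (sq_pos_neq _ _ E2). pose proof (pow2_ge_0 (b1 - a1)). lra.
  - pose proof (sq_pos_neq _ _ E1). pose proof (pow2_ge_0 (b2 - a2)). lra.
Qed.

Lemma vnorm_sub_sym p q : vnorm (sub p q) = vnorm (sub q p).
Proof. unfold vnorm, sub; cbn [fst snd]. apply f_equal. ring. Qed.

Lemma dist2_eq p q : dist2 p q = vnorm (sub q p).
Proof. unfold dist2, vnorm, sub; cbn [fst snd]. apply f_equal. ring. Qed.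

Lemma lagrange u v : vdot u v ^ 2 + vdet u v ^ 2 = (fst u ^ 2 + snd u ^ 2) * (fst v ^ 2 + snd v ^ 2).
Proof. unfold vdot, vdet. ring. Qed.

Lemma cos_arg_bound u v : 0 < vnorm u -> 0 < vnorm v ->
  -1 <= vdot u v / (vnorm u * vnorm v) <= 1.
Proof.
  intros Hu Hv.
  pose proof (vnorm_sq u). pose proof (vnorm_sq v). pose proof (lagrange u v).
  assert (Hp : 0 < vnorm u * vnorm v) by nra.
  assert (Habs : vdot u v ^ 2 <= (vnorm u * vnorm v) ^ 2) by nra.
  split.
  - apply (Rmult_le_reg_r (vnorm u * vnorm v)); auto.
    unfold Rdiv. rewrite Rmult_assoc, Rinv_l by lra. nra.
  - apply (Rmult_le_reg_r (vnorm u * vnorm v)); auto.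
    unfold Rdiv. rewrite Rmult_assoc, Rinv_l by lra. nra.
Qed.

Lemma cos_ang u v : 0 < vnorm u -> 0 < vnorm v ->
  cos (ang u v) = vdot u v / (vnorm u * vnorm v).
Proof. intros. unfold ang. apply cos_acos. now apply cos_arg_bound. Qed.

Lemma sin_ang u v : 0 < vnorm u -> 0 < vnorm v -> 0 <= vdet u v ->
  sin (ang u v) = vdet u v / (vnorm u * vnorm v).
Proof.
  intros Hu Hv Hd. unfold ang. rewrite sin_acos by now apply cos_arg_bound.
  pose proof (vnorm_sq u). pose proof (vnorm_sq v). pose proof (lagrange u v).
  assert (Hp : 0 < vnorm u * vnorm v) by nra.
  assert (Hq : 0 <= vdet u v / (vnorm u * vnorm v)).
  { unfold Rdiv. apply Rmult_le_pos. lra. left; apply Rinv_0_lt_compat; lra. }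
  rewrite <- (sqrt_Rsqr (vdet u v / (vnorm u * vnorm v))) by exact Hq.
  apply f_equal. unfold Rsqr.
  apply (Rmult_eq_reg_r ((vnorm u * vnorm v)*(vnorm u * vnorm v))); [|nra].
  field_simplify; [|lra|lra]. 
  replace ((vnorm u)^2) with (fst u ^ 2 + snd u ^ 2) by (rewrite <- vnorm_sq; ring).
  replace ((vnorm v)^2) with (fst v ^ 2 + snd v ^ 2) by (rewrite <- vnorm_sq; ring).
  nra.
Qed.

Lemma ang_bound u v : 0 <= ang u v <= PI.
Proof. apply acos_bound. Qed.


Lemma four_par (x1 x2 x3 x4 n1 n2 n3 n4 : R) : 0<n1 -> 0<n2 -> 0<n3 -> 0<n4 ->
  n1*x2 = n2*x1 -> n2*x3 = n3*x2 -> n1*x4 = n4*x1 -> x1+x2+x3+x4 = 0 -> x1 = 0.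
Proof.
  intros H1 H2 H3 H4 E1 E2 E3 E4.
  assert (E: n2 * x1 * (n1+n2+n3+n4) = n1*n2*(x1+x2+x3+x4) - n2*(n1*x2 - n2*x1)
     - n1*(n2*x3 - n3*x2) - n3*(n1*x2 - n2*x1) - n2*(n1*x4 - n4*x1)) by ring.
  rewrite E4, E1, E2, E3 in E. replace (n2*x1 - n2*x1) with 0 in E by ring.
  replace (n3*x2 - n3*x2) with 0 in E by ring.
  replace (n4*x1 - n4*x1) with 0 in E by ring.
  assert (n2 * x1 * (n1+n2+n3+n4) = 0) by lra.
  apply Rmult_integral in H. destruct H as [H|H]; [|lra].
  apply Rmult_integral in H. destruct H; lra.
Qed.

Lemma antipar u v : 0 < vnorm u -> 0 < vnorm v -> vdot u v = - (vnorm u * vnorm v) ->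
  vnorm v * fst u = - (vnorm u * fst v) /\ vnorm v * snd u = - (vnorm u * snd v).
Proof.
  intros Hu Hv E. pose proof (vnorm_sq u). pose proof (vnorm_sq v).
  unfold vdot in E.
  set (x := vnorm v * fst u + vnorm u * fst v).
  set (y := vnorm v * snd u + vnorm u * snd v).
  assert (Z : x * x + y * y = 0).
  { unfold x, y. 
    replace ((vnorm v * fst u + vnorm u * fst v) * (vnorm v * fst u + vnorm u * fst v) +
      (vnorm v * snd u + vnorm u * snd v) * (vnorm v * snd u + vnorm u * snd v))
     with ((vnorm v * vnorm v) * (fst u ^ 2 + snd u ^2) + (vnorm u * vnorm u) * (fst v ^ 2 + snd v ^ 2)
        + 2 * (vnorm u * vnorm v) * (fst u * fst v + snd u * snd v)) by ring.
    rewrite E, <- H, <- H0. ring. }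
  assert (x = 0) by nra. assert (y = 0) by nra. unfold x, y in *. lra.
Qed.

Lemma cos_ang_pi u v : 0 < vnorm u -> 0 < vnorm v -> ang u v = PI ->
  vdot u v = - (vnorm u * vnorm v).
Proof.
  intros Hu Hv E. pose proof (cos_ang u v Hu Hv) as C. rewrite E, cos_PI in C.
  assert (0 < vnorm u * vnorm v) by nra.
  apply (Rmult_eq_compat_r (vnorm u * vnorm v)) in C.
  unfold Rdiv in C. rewrite Rmult_assoc, Rinv_l in C by lra. lra.
Qed.


Lemma cos_le x y : 0 <= x -> x <= y -> y <= PI -> cos y <= cos x.
Proof.
  intros. destruct (Req_dec x y). subst; lra.
  left. apply cos_decreasing_1; lra.
Qed.

Lemma angle_comb (A B C D al : R) :
  0 <= A <= PI -> 0 <= B <= PI -> 0 <= C <= PI -> 0 <= D <= PI ->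
  0 < al <= PI/2 -> al <= A + C -> al <= B + D ->
  cos (A + C) = cos (B + D) -> sin (A + C) = - sin (B + D) ->
  ~ (A = PI /\ B = PI /\ C = PI /\ D = PI) ->
  cos (A + C) <= cos al.
Proof.
  intros HA HB HC HD Hal H1 H2 Ec Es Hn.
  destruct (Rle_dec (A + C) PI).
  - apply cos_le; lra.
  - destruct (Rle_dec (B + D) PI).
    + rewrite Ec. apply cos_le; lra.
    + exfalso. apply Hn.
      assert (A + C = 2 * PI).
      { destruct (Rle_dec (2*PI) (A + C)). lra.
        pose proof (sin_lt_0 (A + C) ltac:(lra) ltac:(lra)).
        pose proof (sin_le_0 (B + D) ltac:(lra) ltac:(lra)). lra. }
      assert (B + D = 2 * PI).
      { destruct (Rle_dec (2*PI) (B + D)). lra.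
        pose proof (sin_lt_0 (B + D) ltac:(lra) ltac:(lra)).
        pose proof (sin_le_0 (A + C) ltac:(lra) ltac:(lra)). lra. }
      lra.
Qed.

Lemma final_bound (a b c d : pt) (al : R) :
  a <> b -> b <> c -> c <> d -> d <> a -> a <> c -> b <> d ->
  0 <= vdet (sub b a) (sub d a) -> 0 <= vdet (sub c b) (sub a b) ->
  0 <= vdet (sub d c) (sub b c) -> 0 <= vdet (sub a d) (sub c d) ->
  0 < al <= PI/2 ->
  al <= ang (sub b a) (sub d a) + ang (sub d c) (sub b c) ->
  al <= ang (sub c b) (sub a b) + ang (sub a d) (sub c d) ->
  pq a b c d <= 1 / sin (al/2).
Proof.
  intros Hab Hbc Hcd Hda Hac Hbd Ta Tb Tc Td Hal HX HY.
  pose proof (neq_norm _ _ Hab) as Pa1.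
  pose proof (neq_norm _ _ (not_eq_sym Hda)) as Pa2.
  pose proof (neq_norm _ _ Hbc) as Pb1.
  pose proof (neq_norm _ _ (not_eq_sym Hab)) as Pb2.
  pose proof (neq_norm _ _ Hcd) as Pc1.
  pose proof (neq_norm _ _ (not_eq_sym Hbc)) as Pc2.
  pose proof (neq_norm _ _ Hda) as Pd1.
  pose proof (neq_norm _ _ (not_eq_sym Hcd)) as Pd2.
  set (A := ang (sub b a) (sub d a)). set (B := ang (sub c b) (sub a b)).
  set (C := ang (sub d c) (sub b c)). set (D := ang (sub a d) (sub c d)).
  assert (Hcos : cos (A + C) = cos (B + D)).
  { unfold A, B, C, D. rewrite !cos_plus, !cos_ang, !sin_ang by assumption.
    rewrite (vnorm_sub_sym a b), (vnorm_sub_sym a d), (vnorm_sub_sym b c), (vnorm_sub_sym c d).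
    rewrite (vnorm_sub_sym a b), (vnorm_sub_sym a d), (vnorm_sub_sym b c), (vnorm_sub_sym c d) in *.
    field_simplify; [|lra..].
    f_equal. unfold vdot, vdet, sub; cbn [fst snd]. ring. }
  assert (Hsin : sin (A + C) = - sin (B + D)).
  { unfold A, B, C, D. rewrite !sin_plus, !cos_ang, !sin_ang by assumption.
    rewrite (vnorm_sub_sym a b), (vnorm_sub_sym a d), (vnorm_sub_sym b c), (vnorm_sub_sym c d).
    rewrite (vnorm_sub_sym a b), (vnorm_sub_sym a d), (vnorm_sub_sym b c), (vnorm_sub_sym c d) in *.
    field_simplify; [|lra..].
    f_equal. unfold vdot, vdet, sub; cbn [fst snd]. ring. }
  assert (Hn : ~ (A = PI /\ B = PI /\ C = PI /\ D = PI)).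
  { intros [EA [EB [EC ED]]].
    apply cos_ang_pi in EA; auto. apply cos_ang_pi in EB; auto.
    apply cos_ang_pi in EC; auto. apply cos_ang_pi in ED; auto.
    apply antipar in EA; auto. apply antipar in EB; auto.
    apply antipar in EC; auto. apply antipar in ED; auto.
    rewrite (vnorm_sub_sym a b), (vnorm_sub_sym a d), (vnorm_sub_sym b c), (vnorm_sub_sym c d) in *.
    unfold sub in *; cbn [fst snd] in *.
    destruct EA as [EA1 EA2], EB as [EB1 EB2], EC as [EC1 EC2], ED as [ED1 ED2].
    set (n1 := vnorm (fst b - fst a, snd b - snd a)) in *.
    set (n2 := vnorm (fst c - fst b, snd c - snd b)) in *.
    set (n3 := vnorm (fst d - fst c, snd d - snd c)) in *.
    set (n4 := vnorm (fst d - fst a, snd d - snd a)) in *.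
    assert (X1 : fst b - fst a = 0).
    { apply (four_par (fst b - fst a) (fst c - fst b) (fst d - fst c) (fst a - fst d) n1 n2 n3 n4); auto; lra. }
    assert (X2 : snd b - snd a = 0).
    { apply (four_par (snd b - snd a) (snd c - snd b) (snd d - snd c) (snd a - snd d) n1 n2 n3 n4); auto; lra. }
    apply Hab. destruct a, b; cbn [fst snd] in *. f_equal; lra. }
  assert (HAb : 0 <= A <= PI) by apply ang_bound.
  assert (HBb : 0 <= B <= PI) by apply ang_bound.
  assert (HCb : 0 <= C <= PI) by apply ang_bound.
  assert (HDb : 0 <= D <= PI) by apply ang_bound.
  pose proof (angle_comb A B C D al HAb HBb HCb HDb Hal HX HY Hcos Hsin Hn) as Hc.
  unfold A, C in Hc. rewrite cos_plus, !cos_ang, !sin_ang in Hc by assumption.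
  set (P := vnorm (sub b a) * vnorm (sub d c)).
  set (Q := vnorm (sub d a) * vnorm (sub b c)).
  set (Rr := vnorm (sub c a) * vnorm (sub d b)).
  pose proof (neq_norm _ _ Hac) as Pac. pose proof (neq_norm _ _ Hbd) as Pbd.
  assert (HR : 0 < Rr) by (unfold Rr; nra).
  assert (HP : 0 < P) by (unfold P; nra).
  assert (HQ : 0 < Q) by (unfold Q; nra).
  set (Re := vdot (sub b a) (sub d a) * vdot (sub d c) (sub b c) - vdet (sub b a) (sub d a) * vdet (sub d c) (sub b c)).
  assert (HRe : Re <= cos al * (P * Q)).
  { assert (E : Re = (vdot (sub b a) (sub d a) / (vnorm (sub b a) * vnorm (sub d a)) *
      (vdot (sub d c) (sub b c) / (vnorm (sub d c) * vnorm (sub b c))) -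
      vdet (sub b a) (sub d a) / (vnorm (sub b a) * vnorm (sub d a)) *
      (vdet (sub d c) (sub b c) / (vnorm (sub d c) * vnorm (sub b c)))) * (P * Q)).
    { unfold Re, P, Q. field. split; lra. }
    rewrite E. apply Rmult_le_compat_r. nra. exact Hc. }
  assert (Iden : Rr * Rr = P * P + Q * Q - 2 * Re).
  { unfold Rr, P, Q, Re.
    replace (vnorm (sub c a) * vnorm (sub d b) * (vnorm (sub c a) * vnorm (sub d b))) with
      ((vnorm (sub c a) * vnorm (sub c a)) * (vnorm (sub d b) * vnorm (sub d b))) by ring.
    replace (vnorm (sub b a) * vnorm (sub d c) * (vnorm (sub b a) * vnorm (sub d c))) with
      ((vnorm (sub b a) * vnorm (sub b a)) * (vnorm (sub d c) * vnorm (sub d c))) by ring.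
    replace (vnorm (sub d a) * vnorm (sub b c) * (vnorm (sub d a) * vnorm (sub b c))) with
      ((vnorm (sub d a) * vnorm (sub d a)) * (vnorm (sub b c) * vnorm (sub b c))) by ring.
    rewrite !vnorm_sq. unfold vdot, vdet, sub; cbn [fst snd]. ring. }
  assert (Hca : 0 <= cos al <= 1).
  { split. apply cos_ge_0; lra. apply COS_bound. }
  assert (Hs : 0 < sin (al / 2)). { apply sin_gt_0; lra. }
  assert (Hs2 : sin (al/2) * sin (al/2) = (1 - cos al) / 2).
  { assert (E2 : cos al = cos (2 * (al/2))) by (f_equal; field).
    rewrite E2, cos_2a_sin. field. }
  assert (Hpq : pq a b c d = (P + Q) / Rr).
  { unfold pq, P, Q, Rr. rewrite !dist2_eq.
    rewrite (vnorm_sub_sym c b). reflexivity. }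
  rewrite Hpq.
  assert (Key : (P + Q) * sin (al/2) <= Rr).
  { apply Rsqr_incr_0_var. 2: lra. unfold Rsqr.
    replace ((P + Q) * sin (al / 2) * ((P + Q) * sin (al / 2))) with
      ((P + Q) * (P + Q) * (sin (al/2) * sin (al/2))) by ring.
    rewrite Hs2, Iden. assert (0 <= (1 + cos al) * ((P-Q)*(P-Q))) by (apply Rmult_le_pos; [lra | apply Rle_0_sqr]). lra. }
  apply (Rmult_le_reg_r (Rr * sin (al/2))). nra.
  field_simplify; [|lra|lra]. lra.
Qed.


Definition opp (u : pt) : pt := (- fst u, - snd u).
Definition frame := (pt * pt * pt)%type.
Definition fr (F : frame) : frame :=
  match F with (o, e1, e2) => (padd o e1, e2, opp e1) end.
Definition frk (n : nat) (F : frame) : frame := Nat.iter n fr F.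
Definition Q (F : frame) (X Y : R) : pt :=
  match F with (o, e1, e2) =>
    (fst o + X * fst e1 + Y * fst e2, snd o + X * snd e1 + Y * snd e2) end.
Definition Pt (F : frame) (s : R) : pt :=
  Q (frk (Z.to_nat (Int_part s)) F) (s - IZR (Int_part s)) 0.

Lemma frk_S n F : frk (S n) F = fr (frk n F).
Proof. reflexivity. Qed.

Lemma frk_add n k F : frk (n + k) F = frk n (frk k F).
Proof. unfold frk. apply Nat.iter_add. Qed.

Lemma Q_fr F X Y : Q (fr F) X Y = Q F (1 - Y) X.
Proof. destruct F as [[o e1] e2]. unfold Q, fr, padd, opp; cbn [fst snd]. f_equal; ring. Qed.

Lemma frk4 F : frk 4 F = F.
Proof.
  destruct F as [[o e1] e2]. destruct o as [o1 o2], e1 as [a1 a2], e2 as [b1 b2].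
  unfold frk; simpl. unfold padd, opp; cbn [fst snd]. f_equal; [f_equal|]; f_equal; ring.
Qed.

Lemma Int_part_nat (n : nat) f : 0 <= f < 1 -> Int_part (INR n + f) = Z.of_nat n.
Proof.
  intros H. symmetry. apply Int_part_spec. rewrite <- INR_IZR_INZ. lra.
Qed.

Lemma Pt_side F (n : nat) f : 0 <= f <= 1 -> Pt F (INR n + f) = Q (frk n F) f 0.
Proof.
  intros H. destruct (Req_dec f 1) as [E|E].
  - subst f. replace (INR n + 1) with (INR (S n) + 0) by (rewrite S_INR; ring).
    unfold Pt. rewrite Int_part_nat by lra. rewrite Nat2Z.id, <- INR_IZR_INZ.
    rewrite frk_S, Q_fr. replace (INR (S n) + 0 - INR (S n)) with 0 by ring.
    f_equal; ring.
  - unfold Pt. rewrite Int_part_nat by lra. rewrite Nat2Z.id, <- INR_IZR_INZ.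
    f_equal; ring.
Qed.

Lemma Pt_per F s : 0 <= s -> Pt F (s + 4) = Pt F s.
Proof.
  intros Hs. unfold Pt.
  assert (E : Int_part (s + 4) = (Int_part s + 4)%Z).
  { symmetry. apply Int_part_spec. rewrite plus_IZR.
    pose proof (base_Int_part s). lra. }
  rewrite E. 
  assert (0 <= Int_part s)%Z.
  { assert (-1 < Int_part s)%Z. { apply lt_IZR. pose proof (base_Int_part s). lra. } lia. }
  replace (Z.to_nat (Int_part s + 4)) with (4 + Z.to_nat (Int_part s))%nat by lia.
  rewrite Nat.add_comm, frk_add, frk4. rewrite plus_IZR. f_equal. simpl. ring.
Qed.


Lemma acos_le x y : -1 <= x -> x <= y -> y <= 1 -> acos y <= acos x.
Proof.
  intros. destruct (Rle_dec (acos y) (acos x)) as [|N]; auto.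
  exfalso. pose proof (acos_bound x). pose proof (acos_bound y).
  pose proof (cos_decreasing_1 (acos x) (acos y) ltac:(lra) ltac:(lra) ltac:(lra) ltac:(lra) ltac:(lra)).
  rewrite !cos_acos in H4 by lra. lra.
Qed.

Lemma unit_cmp c1 s1 c2 s2 : c1*c1 + s1*s1 = 1 -> c2*c2 + s2*s2 = 1 -> 0 <= s1 -> 0 < s2 ->
  c1 * s2 <= s1 * c2 -> c1 <= c2.
Proof.
  intros E1 E2 H1 H2 H. destruct (Rle_dec c1 c2) as [|N]; auto. exfalso.
  destruct (Rle_dec 0 c2).
  - assert (c2 * (s1 - s2) > 0) by nra.
    assert (c2 > 0) by nra. assert (s1 > s2) by nra. nra.
  - assert (c1 <= 0) by nra. assert (s2 < s1) by nra. nra.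
Qed.

Lemma ang_ge u v p q : 0 < vnorm u -> 0 < vnorm v -> 0 < vnorm p -> 0 < vnorm q ->
  0 <= vdet u v -> 0 < vdet p q -> vdot u v * vdet p q <= vdet u v * vdot p q ->
  ang p q <= ang u v.
Proof.
  intros Hu Hv Hp Hq Duv Dpq H. unfold ang. 
  pose proof (cos_arg_bound u v Hu Hv). pose proof (cos_arg_bound p q Hp Hq).
  apply acos_le; try lra.
  pose proof (vnorm_sq u). pose proof (vnorm_sq v). pose proof (vnorm_sq p). pose proof (vnorm_sq q).
  pose proof (lagrange u v). pose proof (lagrange p q).
  set (Nu := vnorm u * vnorm v). set (Np := vnorm p * vnorm q).
  assert (PNu : 0 < Nu) by (unfold Nu; nra). assert (PNp : 0 < Np) by (unfold Np; nra).
  apply (unit_cmp _ (vdet u v / Nu) _ (vdet p q / Np)).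
  - apply (Rmult_eq_reg_r (Nu * Nu)); [|nra]. field_simplify; [|lra].
    unfold Nu. nra.
  - apply (Rmult_eq_reg_r (Np * Np)); [|nra]. field_simplify; [|lra].
    unfold Np. nra.
  - unfold Rdiv. apply Rmult_le_pos; [lra | left; apply Rinv_0_lt_compat; lra].
  - unfold Rdiv. apply Rmult_lt_0_compat; [lra | apply Rinv_0_lt_compat; lra].
  - apply (Rmult_le_reg_r (Nu * Np)); [nra|]. field_simplify; [|lra|lra]. lra.
Qed.


Definition Mv (e1 e2 : pt) (a1 a2 : R) : pt :=
  (a1 * fst e1 + a2 * fst e2, a1 * snd e1 + a2 * snd e2).

Lemma sub_Q o e1 e2 X Y X' Y' :
  sub (Q (o,e1,e2) X Y) (Q (o,e1,e2) X' Y') = Mv e1 e2 (X - X') (Y - Y').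
Proof. unfold sub, Q, Mv; cbn [fst snd]. f_equal; ring. Qed.

Lemma dot_Mv e1 e2 a1 a2 b1 b2 :
  vdot (Mv e1 e2 a1 a2) (Mv e1 e2 b1 b2) =
  a1 * b1 * vdot e1 e1 + a2 * b2 * vdot e2 e2 + (a1 * b2 + a2 * b1) * vdot e1 e2.
Proof. unfold vdot, Mv; cbn [fst snd]. ring. Qed.

Lemma det_Mv e1 e2 a1 a2 b1 b2 :
  vdet (Mv e1 e2 a1 a2) (Mv e1 e2 b1 b2) = vdet e1 e2 * (a1 * b2 - a2 * b1).
Proof. unfold vdet, Mv; cbn [fst snd]. ring. Qed.

Lemma det_pos_norm u v : 0 < vdet u v -> 0 < vnorm u /\ 0 < vnorm v.
Proof.
  intros H. pose proof (lagrange u v). pose proof (vnorm_sq u). pose proof (vnorm_sq v).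
  pose proof (vnorm_ge0 u). pose proof (vnorm_ge0 v).
  split.
  - destruct (Req_dec (vnorm u) 0) as [E|E]; [|lra].
    exfalso. rewrite E in H1. assert (vdet u v ^ 2 <= 0) by nra. nra.
  - destruct (Req_dec (vnorm v) 0) as [E|E]; [|lra].
    exfalso. rewrite E in H2. assert (vdet u v ^ 2 <= 0) by nra. nra.
Qed.

Lemma Mv_nz e1 e2 a1 a2 : 0 < vdet e1 e2 -> (a1 <> 0 \/ a2 <> 0) -> 0 < vnorm (Mv e1 e2 a1 a2).
Proof.
  intros H N. pose proof (vnorm_ge0 (Mv e1 e2 a1 a2)).
  destruct (Req_dec (vnorm (Mv e1 e2 a1 a2)) 0) as [E|E]; [|lra]. exfalso.
  pose proof (vnorm_sq (Mv e1 e2 a1 a2)) as S. rewrite E in S.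
  assert (F1 : fst (Mv e1 e2 a1 a2) = 0) by nra.
  assert (F2 : snd (Mv e1 e2 a1 a2) = 0) by nra.
  unfold Mv in F1, F2; cbn [fst snd] in F1, F2.
  assert (G1 : a1 * vdet e1 e2 = 0).
  { replace (a1 * vdet e1 e2) with ((a1 * fst e1 + a2 * fst e2) * snd e2 - (a1 * snd e1 + a2 * snd e2) * fst e2)
      by (unfold vdet; ring). rewrite F1, F2. ring. }
  assert (G2 : a2 * vdet e1 e2 = 0).
  { replace (a2 * vdet e1 e2) with (fst e1 * (a1 * snd e1 + a2 * snd e2) - snd e1 * (a1 * fst e1 + a2 * fst e2))
      by (unfold vdet; ring). rewrite F1, F2. ring. }
  apply Rmult_integral in G1. apply Rmult_integral in G2. 
  destruct N as [N|N]; destruct G1; destruct G2; lra.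
Qed.

Definition Inv (al : R) (F : frame) : Prop :=
  match F with (_, e1, e2) =>
    vnorm e1 = vnorm e2 /\ 0 < vdet e1 e2 /\
    cos al = Rabs (vdot e1 e2) / (vnorm e1 * vnorm e2) end.

Lemma vnorm_opp u : vnorm (opp u) = vnorm u.
Proof. unfold vnorm, opp; cbn [fst snd]. apply f_equal. ring. Qed.

Lemma Inv_fr al F : Inv al F -> Inv al (fr F).
Proof.
  destruct F as [[o e1] e2]. unfold Inv, fr. intros [H1 [H2 H3]].
  rewrite vnorm_opp. split; [lra|]. split.
  - unfold vdet, opp in *; cbn [fst snd]. lra.
  - rewrite H3. replace (vdot e2 (opp e1)) with (- vdot e1 e2) by (unfold vdot, opp; cbn [fst snd]; ring).
    rewrite Rabs_Ropp. rewrite H1. reflexivity.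
Qed.

Lemma Inv_frk al n F : Inv al F -> Inv al (frk n F).
Proof. induction n; intros H; [exact H|]. rewrite frk_S. apply Inv_fr. auto. Qed.


Lemma ang_cos_le x y : 0 <= x <= PI -> 0 <= y <= PI -> cos y <= cos x -> x <= y.
Proof.
  intros. destruct (Rle_dec x y); auto. exfalso.
  pose proof (cos_decreasing_1 y x ltac:(lra) ltac:(lra) ltac:(lra) ltac:(lra) ltac:(lra)). lra.
Qed.

Lemma half_gen h al : 0 <= h <= PI -> 0 <= cos h -> 0 <= al <= PI ->
  2 * cos h * cos h - 1 <= cos al -> al / 2 <= h.
Proof.
  intros Hh Hc Ha H.
  assert (h <= PI / 2).
  { destruct (Rle_dec h (PI/2)); auto. exfalso.
    pose proof (cos_decreasing_1 (PI/2) h ltac:(lra) ltac:(lra) ltac:(lra) ltac:(lra) ltac:(lra)).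
    rewrite cos_PI2 in H0. lra. }
  assert (cos (2 * h) = 2 * cos h * cos h - 1) by (rewrite cos_2a_cos; ring).
  assert (al <= 2 * h). { apply ang_cos_le; try lra. }
  lra.
Qed.

Lemma norm_Mv_sq e1 e2 a1 a2 :
  vnorm (Mv e1 e2 a1 a2) * vnorm (Mv e1 e2 a1 a2) =
  a1 * a1 * vdot e1 e1 + a2 * a2 * vdot e2 e2 + 2 * a1 * a2 * vdot e1 e2.
Proof. rewrite vnorm_sq. unfold vdot, Mv; cbn [fst snd]. ring. Qed.

Section FrameFacts.
Variables (al : R) (o e1 e2 : pt).
Hypothesis HI : Inv al (o, e1, e2).
Hypothesis Hal : 0 < al <= PI / 2.

Lemma ff_L2 : vdot e2 e2 = vdot e1 e1 /\ 0 < vdot e1 e1 /\ vnorm e1 * vnorm e2 = vdot e1 e1 /\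
  Rabs (vdot e1 e2) < vdot e1 e1 /\ cos al = Rabs (vdot e1 e2) / vdot e1 e1.
Proof.
  destruct HI as [H1 [H2 H3]].
  pose proof (det_pos_norm _ _ H2) as [P1 P2].
  pose proof (vnorm_sq e1). pose proof (vnorm_sq e2).
  assert (E1 : vdot e1 e1 = vnorm e1 * vnorm e1) by (rewrite H; unfold vdot; ring).
  assert (E2 : vdot e2 e2 = vnorm e2 * vnorm e2) by (rewrite H0; unfold vdot; ring).
  assert (E : vnorm e1 * vnorm e2 = vdot e1 e1) by (rewrite E1, H1; ring).
  split. rewrite E1, E2, H1; ring. split. nra. split. exact E. split.
  - pose proof (lagrange e1 e2) as LG.
    replace (fst e1 ^ 2 + snd e1 ^ 2) with (vdot e1 e1) in LG by (unfold vdot; ring).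
    replace (fst e2 ^ 2 + snd e2 ^ 2) with (vdot e2 e2) in LG by (unfold vdot; ring).
    assert (vdot e2 e2 = vdot e1 e1) by (rewrite E1, E2, H1; ring).
    rewrite H4 in LG.
    assert (vdot e1 e2 * vdot e1 e2 < vdot e1 e1 * vdot e1 e1) by nra.
    assert (0 < vdot e1 e1) by nra.
    apply Rabs_def1; nra.
  - rewrite H3, E. reflexivity.
Qed.

Lemma corner_ge : al <= ang (Mv e1 e2 0 1) (Mv e1 e2 (-1) 0).
Proof.
  destruct (ff_L2) as [F1 [F2 [F3 [F4 F5]]]]. destruct HI as [_ [H2 _]].
  pose proof (Mv_nz e1 e2 0 1 H2 ltac:(lra)) as N1.
  pose proof (Mv_nz e1 e2 (-1) 0 H2 ltac:(lra)) as N2.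
  apply ang_cos_le; [lra | apply ang_bound |].
  rewrite cos_ang by assumption. rewrite dot_Mv.
  pose proof (norm_Mv_sq e1 e2 0 1) as S1. pose proof (norm_Mv_sq e1 e2 (-1) 0) as S2.
  assert (E : vnorm (Mv e1 e2 0 1) * vnorm (Mv e1 e2 (-1) 0) = vdot e1 e1).
  { assert (X : (vnorm (Mv e1 e2 0 1) * vnorm (Mv e1 e2 (-1) 0))^2 = vdot e1 e1 ^ 2).
    { replace ((vnorm (Mv e1 e2 0 1) * vnorm (Mv e1 e2 (-1) 0))^2) with
        ((vnorm (Mv e1 e2 0 1) * vnorm (Mv e1 e2 0 1)) * (vnorm (Mv e1 e2 (-1) 0) * vnorm (Mv e1 e2 (-1) 0))) by ring.
      rewrite S1, S2, F1. ring. }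
    assert (0 < vnorm (Mv e1 e2 0 1) * vnorm (Mv e1 e2 (-1) 0)) by nra.
    nra. }
  rewrite E, F5. 
  apply (Rmult_le_reg_r (vdot e1 e1)); [lra|]. field_simplify; [|lra|lra].
  idtac.
  pose proof (Rle_abs (- vdot e1 e2)). rewrite Rabs_Ropp in H. lra.
Qed.

Lemma half_ge (a1 a2 b1 b2 : R) : (a1 <> 0 \/ a2 <> 0) -> (b1 <> 0 \/ b2 <> 0) ->
  0 <= vdot (Mv e1 e2 a1 a2) (Mv e1 e2 b1 b2) ->
  2 * (vdot (Mv e1 e2 a1 a2) (Mv e1 e2 b1 b2))^2 - 
     (vnorm (Mv e1 e2 a1 a2) * vnorm (Mv e1 e2 a1 a2)) * (vnorm (Mv e1 e2 b1 b2) * vnorm (Mv e1 e2 b1 b2))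
   <= cos al * ((vnorm (Mv e1 e2 a1 a2) * vnorm (Mv e1 e2 a1 a2)) * (vnorm (Mv e1 e2 b1 b2) * vnorm (Mv e1 e2 b1 b2))) ->
  al / 2 <= ang (Mv e1 e2 a1 a2) (Mv e1 e2 b1 b2).
Proof.
  intros Na Nb Hd H. destruct HI as [_ [H2 _]].
  pose proof (Mv_nz e1 e2 a1 a2 H2 Na) as N1.
  pose proof (Mv_nz e1 e2 b1 b2 H2 Nb) as N2.
  apply half_gen; [apply ang_bound | | lra |].
  - rewrite cos_ang by assumption. unfold Rdiv. apply Rmult_le_pos; [lra|].
    left. apply Rinv_0_lt_compat. nra.
  - rewrite cos_ang by assumption.
    set (d := vdot (Mv e1 e2 a1 a2) (Mv e1 e2 b1 b2)) in *.
    set (n1 := vnorm (Mv e1 e2 a1 a2)) in *. set (n2 := vnorm (Mv e1 e2 b1 b2)) in *.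
    apply (Rmult_le_reg_r ((n1 * n1) * (n2 * n2))); [apply Rmult_lt_0_compat; apply Rmult_lt_0_compat; lra|].
    field_simplify; [|lra]. 
    replace (n1 ^ 2 * n2 ^ 2) with ((n1 * n1) * (n2 * n2)) by ring. lra.
Qed.

Lemma half0 : al / 2 <= ang (Mv e1 e2 1 0) (Mv e1 e2 1 1).
Proof.
  destruct (ff_L2) as [F1 [F2 [F3 [F4 F5]]]].
  apply half_ge; try lra.
  - rewrite dot_Mv, F1. pose proof (Rle_abs (- vdot e1 e2)). rewrite Rabs_Ropp in H. lra.
  - rewrite dot_Mv, !norm_Mv_sq, F1, F5.
    apply (Rmult_le_reg_r (vdot e1 e1)); [lra|]. field_simplify; [|lra].
    pose proof (Rle_abs (vdot e1 e2)). pose proof (Rle_abs (- vdot e1 e2)). rewrite Rabs_Ropp in H0.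
    set (g := vdot e1 e2) in *. set (L := vdot e1 e1) in *. set (ag := Rabs g) in *.
    assert (0 <= L + g) by lra.
    assert (2*L*(L+g)*g <= 2*L*(L+g)*ag) by (apply Rmult_le_compat_l; [apply Rmult_le_pos; lra|lra]).
    lra.
Qed.

Lemma half1 : al / 2 <= ang (Mv e1 e2 (-1) 1) (Mv e1 e2 (-1) 0).
Proof.
  destruct (ff_L2) as [F1 [F2 [F3 [F4 F5]]]].
  apply half_ge; try lra.
  - rewrite dot_Mv, F1. pose proof (Rle_abs (vdot e1 e2)). lra.
  - rewrite dot_Mv, !norm_Mv_sq, F1, F5.
    apply (Rmult_le_reg_r (vdot e1 e1)); [lra|]. field_simplify; [|lra].
    pose proof (Rle_abs (vdot e1 e2)). pose proof (Rle_abs (- vdot e1 e2)). rewrite Rabs_Ropp in H0.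
    set (g := vdot e1 e2) in *. set (L := vdot e1 e1) in *. set (ag := Rabs g) in *.
    assert (0 <= L - g) by lra.
    assert (2*L*(L-g)*(-g) <= 2*L*(L-g)*ag) by (apply Rmult_le_compat_l; [apply Rmult_le_pos; lra|lra]).
    lra.
Qed.
End FrameFacts.


Lemma ang_sym u v : ang u v = ang v u.
Proof. unfold ang. f_equal. unfold vdot. rewrite (Rmult_comm (vnorm u)). f_equal. ring. Qed.

Section Canon.
Variables (al : R) (o e1 e2 : pt).
Hypothesis HI : Inv al (o, e1, e2).
Hypothesis Hal : 0 < al <= PI / 2.

Lemma canon_cmp (u1 u2 v1 v2 p1 p2 q1 q2 : R) :
  (u1 <> 0 \/ u2 <> 0) -> (v1 <> 0 \/ v2 <> 0) -> (p1 <> 0 \/ p2 <> 0) -> (q1 <> 0 \/ q2 <> 0) ->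
  0 <= u1 * v2 - u2 * v1 -> 0 < p1 * q2 - p2 * q1 ->
  ((u1 * v1 + u2 * v2) * vdot e1 e1 + (u1 * v2 + u2 * v1) * vdot e1 e2) * (p1 * q2 - p2 * q1)
  <= (u1 * v2 - u2 * v1) * ((p1 * q1 + p2 * q2) * vdot e1 e1 + (p1 * q2 + p2 * q1) * vdot e1 e2) ->
  ang (Mv e1 e2 p1 p2) (Mv e1 e2 q1 q2) <= ang (Mv e1 e2 u1 u2) (Mv e1 e2 v1 v2).
Proof.
  intros Nu Nv Np Nq D1 D2 H.
  destruct (ff_L2 al o e1 e2 HI) as [F1 _].
  destruct HI as [_ [HD _]].
  apply ang_ge; try (apply Mv_nz; assumption).
  - rewrite det_Mv. apply Rmult_le_pos; lra.
  - rewrite det_Mv. apply Rmult_lt_0_compat; lra.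
  - rewrite !dot_Mv, !det_Mv, F1.
    replace ((u1 * v1 * vdot e1 e1 + u2 * v2 * vdot e1 e1 + (u1 * v2 + u2 * v1) * vdot e1 e2) *
      (vdet e1 e2 * (p1 * q2 - p2 * q1))) with
      (vdet e1 e2 * (((u1 * v1 + u2 * v2) * vdot e1 e1 + (u1 * v2 + u2 * v1) * vdot e1 e2) * (p1 * q2 - p2 * q1))) by ring.
    replace (vdet e1 e2 * (u1 * v2 - u2 * v1) *
      (p1 * q1 * vdot e1 e1 + p2 * q2 * vdot e1 e1 + (p1 * q2 + p2 * q1) * vdot e1 e2)) with
      (vdet e1 e2 * ((u1 * v2 - u2 * v1) * ((p1 * q1 + p2 * q2) * vdot e1 e1 + (p1 * q2 + p2 * q1) * vdot e1 e2))) by ring.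
    apply Rmult_le_compat_l; lra.
Qed.

Lemma arc0c sx sz sy : 0 <= sx -> sx < sz -> sz < sy -> sy <= 1 ->
  ang (sub (Q (o,e1,e2) sx 0) (Q (o,e1,e2) sz 0)) (sub (Q (o,e1,e2) sy 0) (Q (o,e1,e2) sz 0)) = PI.
Proof.
  intros H1 H2 H3 H4.
  destruct (ff_L2 al o e1 e2 HI) as [F1 [F2 _]].
  destruct HI as [_ [HD _]].
  rewrite !sub_Q. unfold ang.
  pose proof (Mv_nz e1 e2 (sx - sz) (0 - 0) HD ltac:(left; lra)) as N1.
  pose proof (Mv_nz e1 e2 (sy - sz) (0 - 0) HD ltac:(left; lra)) as N2.
  pose proof (norm_Mv_sq e1 e2 (sx - sz) (0 - 0)) as S1.
  pose proof (norm_Mv_sq e1 e2 (sy - sz) (0 - 0)) as S2.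
  rewrite dot_Mv, F1.
  set (n1 := vnorm (Mv e1 e2 (sx - sz) (0 - 0))) in *.
  set (n2 := vnorm (Mv e1 e2 (sy - sz) (0 - 0))) in *.
  assert (E : n1 * n2 = - ((sx - sz) * (sy - sz) * vdot e1 e1)).
  { assert (X : (n1 * n2) * (n1 * n2) = ((sx - sz) * (sy - sz) * vdot e1 e1) * ((sx - sz) * (sy - sz) * vdot e1 e1)).
    { replace ((n1 * n2) * (n1 * n2)) with ((n1*n1)*(n2*n2)) by ring. rewrite S1, S2, F1. ring. }
    assert (0 < n1 * n2) by (apply Rmult_lt_0_compat; lra).
    assert (0 < (sz - sx) * (sy - sz) * vdot e1 e1) by (apply Rmult_lt_0_compat; [apply Rmult_lt_0_compat|]; lra).
    nra. }
  replace ((sx - sz) * (sy - sz) * vdot e1 e1 + (0 - 0) * (0 - 0) * vdot e1 e1 +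
     ((sx - sz) * (0 - 0) + (0 - 0) * (sy - sz)) * vdot e1 e2) with (- (n1 * n2)) by (rewrite E; ring).
  replace (- (n1 * n2) / (n1 * n2)) with (- 1) by (field; split; lra).
  change (IZR (-1)) with (-(IZR 1)). rewrite acos_opp, acos_1. ring.
Qed.

Ltac diff_by e :=
  match goal with |- ?A <= ?B => assert (B - A = e) by ring end.

Lemma arc1c sx ty z : 0 <= sx < 1 -> 0 < ty <= 1 ->
  ((exists sz, sx < sz <= 1 /\ z = Q (o,e1,e2) sz 0) \/ (exists tz, 0 <= tz < ty /\ z = Q (o,e1,e2) 1 tz)) ->
  al <= ang (sub (Q (o,e1,e2) sx 0) z) (sub (Q (o,e1,e2) 1 ty) z).
Proof.
  intros Hx Hy Hz. rewrite ang_sym.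
  destruct (ff_L2 al o e1 e2 HI) as [F1 [F2 _]].
  eapply Rle_trans; [apply (corner_ge al o e1 e2 HI Hal)|].
  destruct Hz as [[sz [Hs ->]] | [tz [Ht ->]]]; rewrite !sub_Q.
  - apply canon_cmp; try (left; lra); try (right; lra); try lra.
    + replace ((1 - sz) * (0 - 0) - (ty - 0) * (sx - sz)) with (ty * (sz - sx)) by ring.
      apply Rmult_le_pos; lra.
    + diff_by (vdot e1 e1 * ((1 - sz) * (sz - sx))).
      assert (0 <= vdot e1 e1 * ((1 - sz) * (sz - sx))) by (apply Rmult_le_pos; [lra|apply Rmult_le_pos; lra]).
      lra.
  - apply canon_cmp; try (left; lra); try (right; lra); try lra.
    + replace ((1 - 1) * (0 - tz) - (ty - tz) * (sx - 1)) with ((ty - tz) * (1 - sx)) by ring.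
      apply Rmult_le_pos; lra.
    + diff_by (vdot e1 e1 * ((ty - tz) * tz)).
      assert (0 <= vdot e1 e1 * ((ty - tz) * tz)) by (apply Rmult_le_pos; [lra|apply Rmult_le_pos; lra]).
      lra.
Qed.

Lemma K_nonneg fy b tz : 0 <= fy <= 1 -> 0 <= b <= 1 -> 0 <= tz <= 1 ->
  0 <= fy * tz + (1 - tz) * b - fy * b + tz * (1 - tz).
Proof.
  intros. destruct (Rle_dec 0 (1 - tz - fy)).
  - replace (fy * tz + (1 - tz) * b - fy * b + tz * (1 - tz)) with
      (fy * tz + b * (1 - tz - fy) + tz * (1 - tz)) by ring.
    assert (0 <= fy * tz) by (apply Rmult_le_pos; lra).
    assert (0 <= b * (1 - tz - fy)) by (apply Rmult_le_pos; lra).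
    assert (0 <= tz * (1 - tz)) by (apply Rmult_le_pos; lra). lra.
  - assert (b * (1 - tz - fy) >= 1 * (1 - tz - fy)) by nra.
    assert (0 <= (1 - tz) * (1 + tz - fy)) by (apply Rmult_le_pos; lra).
    nra.
Qed.

Lemma arc2c sx fy z : 0 < sx < 1 -> 0 < fy < 1 ->
  ((exists sz, sx < sz <= 1 /\ z = Q (o,e1,e2) sz 0) \/ (exists tz, 0 <= tz <= 1 /\ z = Q (o,e1,e2) 1 tz)
    \/ (exists fz, 0 <= fz < fy /\ z = Q (o,e1,e2) (1 - fz) 1)) ->
  al / 2 <= ang (sub (Q (o,e1,e2) sx 0) z) (sub (Q (o,e1,e2) (1 - fy) 1) z).
Proof.
  intros Hx Hy Hz. rewrite ang_sym.
  destruct (ff_L2 al o e1 e2 HI) as [F1 [F2 _]].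
  destruct Hz as [[sz [Hs ->]] | [[tz [Ht ->]] | [fz [Hf ->]]]]; rewrite !sub_Q.
  - eapply Rle_trans; [apply (half1 al o e1 e2 HI Hal)|].
    apply canon_cmp; try (left; lra); try (right; lra); try lra.
    diff_by (vdot e1 e1 * ((sz - sx) * (2 - fy - sz))).
    assert (0 <= vdot e1 e1 * ((sz - sx) * (2 - fy - sz))) by (apply Rmult_le_pos; [lra|apply Rmult_le_pos; lra]).
    lra.
  - pose proof (K_nonneg fy (1 - sx) tz ltac:(lra) ltac:(lra) ltac:(lra)) as HK.
    assert (Hd : 0 <= (1 - fy - 1) * (0 - tz) - (1 - tz) * (sx - 1)).
    { replace ((1 - fy - 1) * (0 - tz) - (1 - tz) * (sx - 1)) with (fy * tz + (1 - tz) * (1 - sx)) by ring.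
      assert (0 <= fy * tz) by (apply Rmult_le_pos; lra).
      assert (0 <= (1 - tz) * (1 - sx)) by (apply Rmult_le_pos; lra). lra. }
    destruct (Rle_dec 0 (vdot e1 e2)).
    + eapply Rle_trans; [apply (half0 al o e1 e2 HI Hal)|].
      apply canon_cmp; try (left; lra); try (right; lra); try lra.
      diff_by (vdot e1 e1 * (fy * tz + (1 - tz) * (1 - sx) - fy * (1 - sx) + tz * (1 - tz)) + 2 * vdot e1 e2 * ((1 - tz) * (1 - sx))).
      assert (0 <= vdot e1 e1 * (fy * tz + (1 - tz) * (1 - sx) - fy * (1 - sx) + tz * (1 - tz))) by (apply Rmult_le_pos; lra).
      assert (0 <= vdot e1 e2 * ((1 - tz) * (1 - sx))) by (apply Rmult_le_pos; [lra|apply Rmult_le_pos; lra]).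
      lra.
    + eapply Rle_trans; [apply (half1 al o e1 e2 HI Hal)|].
      apply canon_cmp; try (left; lra); try (right; lra); try lra.
      diff_by (vdot e1 e1 * (fy * tz + (1 - tz) * (1 - sx) - fy * (1 - sx) + tz * (1 - tz)) - 2 * vdot e1 e2 * (fy * tz)).
      assert (0 <= vdot e1 e1 * (fy * tz + (1 - tz) * (1 - sx) - fy * (1 - sx) + tz * (1 - tz))) by (apply Rmult_le_pos; lra).
      assert (0 <= (- vdot e1 e2) * (fy * tz)) by (apply Rmult_le_pos; [lra|apply Rmult_le_pos; lra]).
      lra.
  - eapply Rle_trans; [apply (half0 al o e1 e2 HI Hal)|].
    apply canon_cmp; try (left; lra); try (right; lra); try lra.
    diff_by (vdot e1 e1 * ((fy - fz) * (sx + fz))).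
    assert (0 <= vdot e1 e1 * ((fy - fz) * (sx + fz))) by (apply Rmult_le_pos; [lra|apply Rmult_le_pos; lra]).
    lra.
Qed.
End Canon.


Lemma Pt_at F (n : nat) s : INR n <= s <= INR n + 1 -> Pt F s = Q (frk n F) (s - INR n) 0.
Proof. intros H. rewrite <- Pt_side by lra. f_equal. ring. Qed.

Lemma Pt_at1 F (n : nat) s : INR n + 1 <= s <= INR n + 2 -> Pt F s =
  match frk n F with (o, e1, e2) => Q (o, e1, e2) 1 (s - INR n - 1) end.
Proof.
  intros H. rewrite (Pt_at F (S n)) by (rewrite S_INR; lra).
  rewrite frk_S, Q_fr. destruct (frk n F) as [[o e1] e2]. rewrite S_INR. f_equal; ring.
Qed.

Lemma Pt_at2 F (n : nat) s : INR n + 2 <= s <= INR n + 3 -> Pt F s =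
  match frk n F with (o, e1, e2) => Q (o, e1, e2) (1 - (s - INR n - 2)) 1 end.
Proof.
  intros H. rewrite (Pt_at F (S (S n))) by (rewrite !S_INR; lra).
  rewrite !frk_S, !Q_fr. destruct (frk n F) as [[o e1] e2]. rewrite !S_INR. f_equal; ring.
Qed.

Lemma Pt_at3 F (n : nat) s : INR n + 3 <= s <= INR n + 4 -> Pt F s =
  match frk n F with (o, e1, e2) => Q (o, e1, e2) 0 (1 - (s - INR n - 3)) end.
Proof.
  intros H. rewrite (Pt_at F (S (S (S n)))) by (rewrite !S_INR; lra).
  rewrite !frk_S, !Q_fr. destruct (frk n F) as [[o e1] e2]. rewrite !S_INR. f_equal; ring.
Qed.

Lemma Pt_at4 F (n : nat) s : INR n + 4 <= s <= INR n + 5 -> Pt F s =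
  match frk n F with (o, e1, e2) => Q (o, e1, e2) (s - INR n - 4) 0 end.
Proof.
  intros H. rewrite (Pt_at F (S (S (S (S n))))) by (rewrite !S_INR; lra).
  rewrite !frk_S, !Q_fr. destruct (frk n F) as [[o e1] e2]. rewrite !S_INR. f_equal; ring.
Qed.

Lemma Pt_at0 F (n : nat) s : INR n <= s <= INR n + 1 -> Pt F s =
  match frk n F with (o, e1, e2) => Q (o, e1, e2) (s - INR n) 0 end.
Proof. intros H. rewrite (Pt_at F n) by lra. destruct (frk n F) as [[o e1] e2]. reflexivity. Qed.

Section Arcs.
Variables (al : R) (F : frame) (m : nat).
Hypothesis HI : Inv al F.
Hypothesis Hal : 0 < al <= PI / 2.

Lemma arc0 sx sz sy : INR m <= sx -> sx < sz -> sz < sy -> sy <= INR m + 1 ->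
  ang (sub (Pt F sx) (Pt F sz)) (sub (Pt F sy) (Pt F sz)) = PI.
Proof.
  intros. rewrite !(Pt_at0 F m) by lra.
  pose proof (Inv_frk al m F HI) as HI'.
  destruct (frk m F) as [[o e1] e2].
  apply (arc0c al o e1 e2 HI'); lra.
Qed.

Lemma arc1 sx sz sy : INR m <= sx < INR m + 1 -> INR m + 1 < sy <= INR m + 2 -> sx < sz < sy ->
  al <= ang (sub (Pt F sx) (Pt F sz)) (sub (Pt F sy) (Pt F sz)).
Proof.
  intros Hx Hy Hz.
  rewrite (Pt_at0 F m sx) by lra. rewrite (Pt_at1 F m sy) by lra.
  pose proof (Inv_frk al m F HI) as HI'.
  destruct (Rle_dec sz (INR m + 1)).
  - rewrite (Pt_at0 F m sz) by lra. destruct (frk m F) as [[o e1] e2].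
    apply (arc1c al o e1 e2 HI' Hal); try lra. left. exists (sz - INR m). split; [lra|reflexivity].
  - rewrite (Pt_at1 F m sz) by lra. destruct (frk m F) as [[o e1] e2].
    apply (arc1c al o e1 e2 HI' Hal); try lra. right. exists (sz - INR m - 1). split; [lra|reflexivity].
Qed.

Lemma arc2 sx sz sy : INR m < sx < INR m + 1 -> INR m + 2 < sy < INR m + 3 -> sx < sz < sy ->
  al / 2 <= ang (sub (Pt F sx) (Pt F sz)) (sub (Pt F sy) (Pt F sz)).
Proof.
  intros Hx Hy Hz.
  rewrite (Pt_at0 F m sx) by lra. rewrite (Pt_at2 F m sy) by lra.
  pose proof (Inv_frk al m F HI) as HI'.
  destruct (Rle_dec sz (INR m + 1)).
  - rewrite (Pt_at0 F m sz) by lra. destruct (frk m F) as [[o e1] e2].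
    apply (arc2c al o e1 e2 HI' Hal); try lra. left. exists (sz - INR m). split; [lra|reflexivity].
  - destruct (Rle_dec sz (INR m + 2)).
    + rewrite (Pt_at1 F m sz) by lra. destruct (frk m F) as [[o e1] e2].
      apply (arc2c al o e1 e2 HI' Hal); try lra. right; left. exists (sz - INR m - 1). split; [lra|reflexivity].
    + rewrite (Pt_at2 F m sz) by lra. destruct (frk m F) as [[o e1] e2].
      apply (arc2c al o e1 e2 HI' Hal); try lra. right; right. exists (sz - INR m - 2). split; [lra|reflexivity].
Qed.
End Arcs.


Lemma floor_nat s : 0 <= s -> exists m : nat, INR m <= s < INR m + 1.
Proof.
  intros Hs. exists (Z.to_nat (Int_part s)).
  pose proof (base_Int_part s) as [B1 B2].
  assert (0 <= Int_part s)%Z.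
  { assert (-1 < Int_part s)%Z. { apply lt_IZR. lra. } lia. }
  rewrite INR_IZR_INZ, Z2Nat.id by assumption. lra.
Qed.

Lemma INR_addk (m k : nat) : INR (m + k) = INR m + INR k.
Proof. apply plus_INR. Qed.

Lemma gen al F sx sz sy sw : Inv al F -> 0 < al <= PI / 2 -> 0 <= sx -> sx < sz -> sz < sy -> sy < sw -> sw < sx + 4 ->
  al <= ang (sub (Pt F sx) (Pt F sz)) (sub (Pt F sy) (Pt F sz)) +
        ang (sub (Pt F sx) (Pt F sw)) (sub (Pt F sy) (Pt F sw)).
Proof.
  intros HI Hal H0 H1 H2 H3 H4.
  pose proof (ang_bound (sub (Pt F sx) (Pt F sz)) (sub (Pt F sy) (Pt F sz))) as BZ.
  pose proof (ang_bound (sub (Pt F sx) (Pt F sw)) (sub (Pt F sy) (Pt F sw))) as BW.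
  assert (HW : ang (sub (Pt F sx) (Pt F sw)) (sub (Pt F sy) (Pt F sw)) =
               ang (sub (Pt F sy) (Pt F sw)) (sub (Pt F (sx + 4)) (Pt F sw))).
  { rewrite Pt_per by lra. apply ang_sym. }
  pose proof PI_RGT_0.
  destruct (floor_nat sx H0) as [m Hm].
  assert (I2 : INR (m + 2) = INR m + 2) by (rewrite INR_addk; simpl; ring).
  assert (I3 : INR (m + 3) = INR m + 3) by (rewrite INR_addk; simpl; ring).
  assert (I4 : INR (m + 4) = INR m + 4) by (rewrite INR_addk; simpl; ring).
  destruct (Rle_dec sy (INR m + 1)).
  { rewrite (arc0 al F m HI) by lra. lra. }
  destruct (Rle_dec sy (INR m + 2)).
  { pose proof (arc1 al F m HI Hal sx sz sy ltac:(lra) ltac:(lra) ltac:(lra)). lra. }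
  rewrite HW in *.
  destruct (Rle_dec (INR m + 4) sy).
  { rewrite (arc0 al F (m + 4) HI sy sw (sx + 4)) by lra. lra. }
  destruct (Rle_dec (INR m + 3) sy).
  { destruct (Req_dec sx (INR m)).
    - rewrite (arc0 al F (m + 3) HI sy sw (sx + 4)) by lra. lra.
    - pose proof (arc1 al F (m+3) HI Hal sy sw (sx + 4) ltac:(lra) ltac:(lra) ltac:(lra)). lra. }
  destruct (Req_dec sx (INR m)).
  - pose proof (arc1 al F (m+2) HI Hal sy sw (sx + 4) ltac:(lra) ltac:(lra) ltac:(lra)). lra.
  - pose proof (arc2 al F m HI Hal sx sz sy ltac:(lra) ltac:(lra) ltac:(lra)).
    pose proof (arc2 al F (m+2) HI Hal sy sw (sx + 4) ltac:(lra) ltac:(lra) ltac:(lra)). lra.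
Qed.


Ltac pt_rw F m s :=
  first [ rewrite (Pt_at0 F m s) by lra | rewrite (Pt_at1 F m s) by lra
        | rewrite (Pt_at2 F m s) by lra | rewrite (Pt_at3 F m s) by lra
        | rewrite (Pt_at4 F m s) by lra ].

Ltac split5 s M :=
  destruct (Rle_dec s (M + 1)); [|destruct (Rle_dec s (M + 2)); [|destruct (Rle_dec s (M + 3));
    [|destruct (Rle_dec s (M + 4))]]].

Lemma orient al F s1 s2 s3 : Inv al F -> 0 <= s1 -> s1 < s2 -> s2 < s3 -> s3 < s1 + 4 ->
  0 <= vdet (sub (Pt F s2) (Pt F s1)) (sub (Pt F s3) (Pt F s1)).
Proof.
  intros HI H0 H1 H2 H3.
  destruct (floor_nat s1 H0) as [m Hm].
  pose proof (Inv_frk al m F HI) as HI'.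
  rewrite (Pt_at0 F m s1) by lra.
  split5 s2 (INR m); pt_rw F m s2; split5 s3 (INR m); pt_rw F m s3;
  destruct (frk m F) as [[o e1] e2]; destruct HI' as [_ [HD _]];
  rewrite !sub_Q, det_Mv; apply Rmult_le_pos; try lra; nra.
Qed.


Lemma rp_Pt a0 e1 e2 t : 0 <= t < 4 -> rhombus_path a0 e1 e2 t = Pt (a0, e1, e2) t.
Proof.
  intros H. unfold rhombus_path, quad_path, lerp, padd.
  destruct (Rlt_dec t 1).
  { rewrite (Pt_at0 _ 0) by (simpl; lra). simpl frk. unfold Q; cbn [fst snd]. simpl INR. f_equal; ring. }
  destruct (Rlt_dec t 2).
  { rewrite (Pt_at1 _ 0) by (simpl; lra). simpl frk. unfold Q; cbn [fst snd]. simpl INR. f_equal; ring. }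
  destruct (Rlt_dec t 3).
  { rewrite (Pt_at2 _ 0) by (simpl; lra). simpl frk. unfold Q; cbn [fst snd]. simpl INR. f_equal; ring. }
  { rewrite (Pt_at3 _ 0) by (simpl; lra). simpl frk. unfold Q; cbn [fst snd]. simpl INR. f_equal; ring. }
Qed.

Lemma upper a0 e1 e2 al : vnorm e1 = vnorm e2 -> 0 < vdet e1 e2 -> 0 < al <= PI / 2 ->
  cos al = Rabs (vdot e1 e2) / (vnorm e1 * vnorm e2) ->
  is_upper_bound (p_values (rhombus_path a0 e1 e2)) (1 / sin (al / 2)).
Proof.
  intros H1 H2 H3 H4 x [a [b [c [d [[Hab [Hac [Had [Hbc [Hbd [Hcd
     [t1 [t2 [t3 [t4 [T0 [T1 [T2 [T3 [T4 [Ea [Eb [Ec Ed]]]]]]]]]]]]]]]]]] ->]]]]].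
  set (F := (a0, e1, e2)).
  assert (HI : Inv al F) by (unfold F, Inv; auto).
  rewrite rp_Pt in Ea, Eb, Ec, Ed by lra. fold F in Ea, Eb, Ec, Ed.
  assert (Ea' : Pt F (t1 + 4) = a) by (rewrite Pt_per by lra; exact Ea).
  assert (Eb' : Pt F (t2 + 4) = b) by (rewrite Pt_per by lra; lra || exact Eb).
  assert (Ec' : Pt F (t3 + 4) = c) by (rewrite Pt_per by lra; exact Ec).
  apply final_bound; try assumption; try congruence.
  - pose proof (orient al F t1 t2 t4 HI ltac:(lra) ltac:(lra) ltac:(lra) ltac:(lra)). congruence.
  - pose proof (orient al F t2 t3 (t1 + 4) HI ltac:(lra) ltac:(lra) ltac:(lra) ltac:(lra)). congruence.
  - pose proof (orient al F t3 t4 (t2 + 4) HI ltac:(lra) ltac:(lra) ltac:(lra) ltac:(lra)). congruence.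
  - pose proof (orient al F t4 (t1 + 4) (t3 + 4) HI ltac:(lra) ltac:(lra) ltac:(lra) ltac:(lra)). congruence.
  - pose proof (gen al F t2 t3 t4 (t1 + 4) HI H3 ltac:(lra) ltac:(lra) ltac:(lra) ltac:(lra) ltac:(lra)) as G.
    rewrite Ea', Eb, Ec, Ed in G. rewrite (ang_sym (sub d c)). lra.
  - pose proof (gen al F t1 t2 t3 t4 HI H3 ltac:(lra) ltac:(lra) ltac:(lra) ltac:(lra) ltac:(lra)) as G.
    rewrite Ea, Eb, Ec, Ed in G. rewrite (ang_sym (sub c b)). lra.
Qed.


Lemma norm_eq x y : 0 <= y -> fst x ^ 2 + snd x ^ 2 = y * y -> vnorm x = y.
Proof. intros H E. unfold vnorm. rewrite E. apply sqrt_square. exact H. Qed.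

Lemma norm_ge x y : 0 <= y -> y * y <= fst x ^ 2 + snd x ^ 2 -> y <= vnorm x.
Proof.
  intros H E. unfold vnorm. rewrite <- (sqrt_square y) by exact H.
  apply sqrt_le_1_alt. exact E.
Qed.

Lemma neq_of_norm p q : 0 < vnorm (sub q p) -> p <> q.
Proof.
  intros H E. subst. unfold vnorm, sub in H. cbn [fst snd] in H.
  replace ((fst q - fst q) ^ 2 + (snd q - snd q) ^ 2) with 0 in H by ring.
  rewrite sqrt_0 in H. lra.
Qed.

Lemma approx (V u v : pt) (r : R) : vnorm u = vnorm v -> 0 < vnorm u -> 0 < vnorm (sub v u) ->
  0 < vnorm (padd u v) -> 0 < r < 1 ->
  (1 - r) * (2 * vnorm u / vnorm (sub v u)) <=
     pq (fst V + r * fst u, snd V + r * snd u) V (fst V + r * fst v, snd V + r * snd v)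
        (fst V + fst u + fst v, snd V + snd u + snd v)
  /\ (fst V + r * fst u, snd V + r * snd u) <> V
  /\ (fst V + r * fst u, snd V + r * snd u) <> (fst V + r * fst v, snd V + r * snd v)
  /\ (fst V + r * fst u, snd V + r * snd u) <> (fst V + fst u + fst v, snd V + snd u + snd v)
  /\ V <> (fst V + r * fst v, snd V + r * snd v)
  /\ V <> (fst V + fst u + fst v, snd V + snd u + snd v)
  /\ (fst V + r * fst v, snd V + r * snd v) <> (fst V + fst u + fst v, snd V + snd u + snd v).
Proof.
  intros Hn Hp Hw Hs Hr.
  set (n := vnorm u) in *. set (w := vnorm (sub v u)) in *. set (s := vnorm (padd u v)) in *.
  pose proof (vnorm_sq u) as Su. pose proof (vnorm_sq v) as Sv.
  pose proof (vnorm_sq (sub v u)) as Sw. pose proof (vnorm_sq (padd u v)) as Ss.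
  fold n w s in Su, Sw, Ss. rewrite <- Hn in Sv. fold n in Sv.
  unfold sub, padd in Sw, Ss; cbn [fst snd] in Sw, Ss.
  pose proof (lagrange u v) as LG. rewrite <- Su, <- Sv in LG.
  set (dt := vdot u v) in *.
  assert (Dt : fst u * fst v + snd u * snd v = dt) by reflexivity.
  assert (Hdt : - (n * n) <= dt).
  { assert (dt * dt <= (n * n) * (n * n)) by (pose proof (pow2_ge_0 (vdet u v)); nra). nra. }
  assert (dAB : vnorm (sub V (fst V + r * fst u, snd V + r * snd u)) = r * n).
  { apply norm_eq. nra. unfold sub; cbn [fst snd].
    replace (r * n * (r * n)) with (r * r * (n * n)) by ring. rewrite Su. ring. }
  assert (dBC : vnorm (sub (fst V + r * fst v, snd V + r * snd v) V) = r * n).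
  { apply norm_eq. nra. unfold sub; cbn [fst snd].
    replace (r * n * (r * n)) with (r * r * (n * n)) by ring. rewrite Sv. ring. }
  assert (dAC : vnorm (sub (fst V + r * fst v, snd V + r * snd v) (fst V + r * fst u, snd V + r * snd u)) = r * w).
  { apply norm_eq. nra. unfold sub; cbn [fst snd].
    replace (r * w * (r * w)) with (r * r * (w * w)) by ring. rewrite Sw. ring. }
  assert (dBD : vnorm (sub (fst V + fst u + fst v, snd V + snd u + snd v) V) = s).
  { apply norm_eq. lra. unfold sub; cbn [fst snd]. rewrite Ss. ring. }
  assert (dCD : (1 - r) * s <= vnorm (sub (fst V + fst u + fst v, snd V + snd u + snd v) (fst V + r * fst v, snd V + r * snd v))).
  { apply norm_ge. nra. unfold sub; cbn [fst snd].
    replace ((1 - r) * s * ((1 - r) * s)) with ((1 - r) * (1 - r) * (s * s)) by ring. rewrite Ss.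
    assert (E : (fst V + fst u + fst v - (fst V + r * fst v)) ^ 2 + (snd V + snd u + snd v - (snd V + r * snd v)) ^ 2
      = (fst u ^ 2 + snd u ^ 2) + (1 - r) * (1 - r) * (fst v ^ 2 + snd v ^ 2) + 2 * (1 - r) * (fst u * fst v + snd u * snd v)) by ring.
    rewrite E, <- Su, <- Sv, Dt.
    assert (E2 : (1 - r) * (1 - r) * ((fst u + fst v) ^ 2 + (snd u + snd v) ^ 2) =
       (1 - r) * (1 - r) * ((fst u ^ 2 + snd u ^ 2) + (fst v ^ 2 + snd v ^ 2) + 2 * (fst u * fst v + snd u * snd v))) by ring.
    rewrite E2, <- Su, <- Sv, Dt.
    assert (0 <= r * r * (n * n)) by (apply Rmult_le_pos; nra).
    assert (0 <= r * (1 - r) * (n * n + dt)) by (apply Rmult_le_pos; nra).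
    nra. }
  assert (dAD : (1 - r) * s <= vnorm (sub (fst V + fst u + fst v, snd V + snd u + snd v) (fst V + r * fst u, snd V + r * snd u))).
  { apply norm_ge. nra. unfold sub; cbn [fst snd].
    replace ((1 - r) * s * ((1 - r) * s)) with ((1 - r) * (1 - r) * (s * s)) by ring. rewrite Ss.
    assert (E : (fst V + fst u + fst v - (fst V + r * fst u)) ^ 2 + (snd V + snd u + snd v - (snd V + r * snd u)) ^ 2
      = (1 - r) * (1 - r) * (fst u ^ 2 + snd u ^ 2) + (fst v ^ 2 + snd v ^ 2) + 2 * (1 - r) * (fst u * fst v + snd u * snd v)) by ring.
    rewrite E, <- Su, <- Sv, Dt.
    assert (E2 : (1 - r) * (1 - r) * ((fst u + fst v) ^ 2 + (snd u + snd v) ^ 2) =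
       (1 - r) * (1 - r) * ((fst u ^ 2 + snd u ^ 2) + (fst v ^ 2 + snd v ^ 2) + 2 * (fst u * fst v + snd u * snd v))) by ring.
    rewrite E2, <- Su, <- Sv, Dt.
    assert (0 <= r * r * (n * n)) by (apply Rmult_le_pos; nra).
    assert (0 <= r * (1 - r) * (n * n + dt)) by (apply Rmult_le_pos; nra).
    nra. }
  assert (Ps : 0 < (1 - r) * s) by nra.
  split.
  - unfold pq. rewrite !dist2_eq. rewrite dAB, dBC, dAC, dBD.
    rewrite (vnorm_sub_sym V (fst V + r * fst u, snd V + r * snd u)) in dAB.
    apply (Rmult_le_reg_r (r * w * s)). apply Rmult_lt_0_compat; [nra|lra].
    field_simplify; [|lra|nra].
    set (X := vnorm (sub (fst V + fst u + fst v, snd V + snd u + snd v) (fst V + r * fst v, snd V + r * snd v))) in *.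
    set (Y := vnorm (sub (fst V + fst u + fst v, snd V + snd u + snd v) (fst V + r * fst u, snd V + r * snd u))) in *.
    assert (r * n * X >= r * n * ((1 - r) * s)) by (apply Rle_ge, Rmult_le_compat_l; nra).
    assert (r * n * Y >= r * n * ((1 - r) * s)) by (apply Rle_ge, Rmult_le_compat_l; nra).
    nra.
  - repeat split.
    + apply neq_of_norm. rewrite dAB. nra.
    + apply neq_of_norm. rewrite dAC. nra.
    + apply neq_of_norm. lra.
    + apply neq_of_norm. rewrite dBC. nra.
    + apply neq_of_norm. rewrite dBD. lra.
    + apply neq_of_norm. lra.
Qed.


Lemma dist2_sym p q : dist2 p q = dist2 q p.
Proof. unfold dist2. apply f_equal. ring. Qed.

Lemma pq_rot a b c d : pq a b c d = pq b c d a.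
Proof.
  unfold pq. rewrite (dist2_sym d a), (dist2_sym b a), (dist2_sym c a).
  f_equal; ring.
Qed.

Lemma sin_half_eq al n w : 0 < al <= PI / 2 -> 0 < n -> 0 < w ->
  w * w = 2 * (n * n) * (1 - cos al) -> 1 / sin (al / 2) = 2 * n / w.
Proof.
  intros Hal Hn Hw E.
  assert (Hs : 0 < sin (al / 2)) by (apply sin_gt_0; pose proof PI_RGT_0; lra).
  assert (Hs2 : sin (al/2) * sin (al/2) = (1 - cos al) / 2).
  { assert (E2 : cos al = cos (2 * (al/2))) by (f_equal; field).
    rewrite E2, cos_2a_sin. field. }
  assert (W : w = 2 * n * sin (al / 2)).
  { assert (0 < 2 * n * sin (al/2)) by nra.
    assert (w * w = (2 * n * sin (al/2)) * (2 * n * sin (al/2))).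
    { replace ((2 * n * sin (al/2)) * (2 * n * sin (al/2))) with (4 * (n * n) * (sin (al/2) * sin (al/2))) by ring.
      rewrite Hs2, E. field. }
    nra. }
  rewrite W. field. lra.
Qed.

Lemma least a0 e1 e2 al : vnorm e1 = vnorm e2 -> 0 < vdet e1 e2 -> 0 < al <= PI / 2 ->
  cos al = Rabs (vdot e1 e2) / (vnorm e1 * vnorm e2) ->
  forall M, is_upper_bound (p_values (rhombus_path a0 e1 e2)) M -> 1 / sin (al / 2) <= M.
Proof.
  intros H1 H2 H3 H4 M HM.
  assert (HI : Inv al (a0, e1, e2)) by (unfold Inv; auto).
  destruct (ff_L2 al a0 e1 e2 HI) as [F1 [F2 [F3 [F4 F5]]]].
  pose proof (det_pos_norm _ _ H2) as [P1 P2].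
  set (K := 1 / sin (al / 2)).
  assert (HK : 0 < K).
  { unfold K. assert (0 < sin (al / 2)) by (apply sin_gt_0; pose proof PI_RGT_0; lra).
    unfold Rdiv. rewrite Rmult_1_l. apply Rinv_0_lt_compat. lra. }
  destruct (Rle_dec K M) as [|NM]; [assumption|]. exfalso.
  set (r := Rmin (1/2) ((K - M) / (2 * K))).
  assert (Hr : 0 < r < 1).
  { unfold r. split. apply Rmin_glb_lt. lra. apply Rdiv_lt_0_compat; lra.
    pose proof (Rmin_l (1/2) ((K - M) / (2 * K))). lra. }
  assert (HrK : r * K <= (K - M) / 2).
  { unfold r. pose proof (Rmin_r (1/2) ((K - M) / (2 * K))).
    apply (Rmult_le_compat_r K) in H; [|lra].
    replace ((K - M) / (2 * K) * K) with ((K - M) / 2) in H by (field; lra). lra. }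
  assert (Hfin : forall n w, 0 < n -> 0 < w -> w * w = 2 * (n * n) * (1 - cos al) ->
     (1 - r) * (2 * n / w) <= M -> False).
  { intros n w Hn Hw E HH. rewrite <- (sin_half_eq al n w H3 Hn Hw E) in HH. fold K in HH. lra. }
  assert (Pn : 0 < vnorm e1) by lra.
  assert (Sq1 : vnorm e1 * vnorm e1 = vdot e1 e1) by (rewrite vnorm_sq; unfold vdot; ring).
  destruct (Rle_dec 0 (vdot e1 e2)) as [Hg|Hg].
  - (* acute corner at a0 *)
    assert (Hw : 0 < vnorm (sub e1 e2)).
    { unfold vnorm. apply sqrt_lt_R0. unfold sub; cbn [fst snd].
      replace ((fst e1 - fst e2) ^ 2 + (snd e1 - snd e2) ^ 2) with (vdot e1 e1 + vdot e2 e2 - 2 * vdot e1 e2)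
        by (unfold vdot; ring).
      rewrite Rabs_right in F4 by lra. lra. }
    assert (Hs : 0 < vnorm (padd e2 e1)).
    { unfold vnorm. apply sqrt_lt_R0. unfold padd; cbn [fst snd].
      replace ((fst e2 + fst e1) ^ 2 + (snd e2 + snd e1) ^ 2) with (vdot e1 e1 + vdot e2 e2 + 2 * vdot e1 e2)
        by (unfold vdot; ring). lra. }
    destruct (approx a0 e2 e1 r (eq_sym H1) P2 Hw Hs Hr) as [Happ [D1 [D2 [D3 [D4 [D5 D6]]]]]].
    set (A := (fst a0 + r * fst e2, snd a0 + r * snd e2)) in *.
    set (C := (fst a0 + r * fst e1, snd a0 + r * snd e1)) in *.
    set (D := (fst a0 + fst e2 + fst e1, snd a0 + snd e2 + snd e1)) in *.
    assert (Hmem : pq a0 C D A <= M).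
    { apply HM. exists a0, C, D, A. split; [|reflexivity].
      split; [auto|]. split; [auto|]. split; [auto|]. split; [auto|]. split; [auto|]. split; [auto|].
      exists 0, r, 2, (4 - r). split; [lra|]. split; [lra|]. split; [lra|]. split; [lra|]. split; [lra|].
      unfold rhombus_path, quad_path, lerp, padd, A, C, D; cbn [fst snd].
      split; [destruct (Rlt_dec 0 1); [|lra]; destruct a0; cbn [fst snd]; f_equal; ring|].
      split; [destruct (Rlt_dec r 1); [|lra]; f_equal; ring|].
      split; [destruct (Rlt_dec 2 1); [lra|]; destruct (Rlt_dec 2 2); [lra|]; destruct (Rlt_dec 2 3); [|lra]; f_equal; ring|].
      destruct (Rlt_dec (4 - r) 1); [lra|]; destruct (Rlt_dec (4 - r) 2); [lra|]; destruct (Rlt_dec (4 - r) 3); [lra|]; f_equal; ring. }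
    rewrite (pq_rot A) in Happ.
    apply (Hfin (vnorm e2) (vnorm (sub e1 e2))); try lra.
    rewrite vnorm_sq. unfold sub; cbn [fst snd]. rewrite H4, Rabs_right by lra. rewrite F3.
    replace (vnorm e2 * vnorm e2) with (vdot e1 e1) by (rewrite <- H1; lra).
    replace ((fst e1 - fst e2) ^ 2 + (snd e1 - snd e2) ^ 2) with (vdot e1 e1 + vdot e2 e2 - 2 * vdot e1 e2)
        by (unfold vdot; ring).
    rewrite F1. field. lra.
  - (* acute corner at a0 + e1 *)
    assert (Hw : 0 < vnorm (sub e2 (- fst e1, - snd e1))).
    { unfold vnorm. apply sqrt_lt_R0. unfold sub; cbn [fst snd].
      replace ((fst e2 - - fst e1) ^ 2 + (snd e2 - - snd e1) ^ 2) with (vdot e1 e1 + vdot e2 e2 + 2 * vdot e1 e2)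
        by (unfold vdot; ring).
      rewrite Rabs_left in F4 by lra. lra. }
    assert (Hs : 0 < vnorm (padd (- fst e1, - snd e1) e2)).
    { unfold vnorm. apply sqrt_lt_R0. unfold padd; cbn [fst snd].
      replace ((- fst e1 + fst e2) ^ 2 + (- snd e1 + snd e2) ^ 2) with (vdot e1 e1 + vdot e2 e2 - 2 * vdot e1 e2)
        by (unfold vdot; ring). lra. }
    assert (Hn : vnorm (- fst e1, - snd e1) = vnorm e2) by (rewrite <- H1; apply (vnorm_opp e1)).
    assert (Pn' : 0 < vnorm (- fst e1, - snd e1)) by lra.
    destruct (approx (fst a0 + fst e1, snd a0 + snd e1) (- fst e1, - snd e1) e2 r Hn Pn' Hw Hs Hr)
      as [Happ [D1 [D2 [D3 [D4 [D5 D6]]]]]].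
    cbn [fst snd] in *.
    set (A := (fst a0 + fst e1 + r * - fst e1, snd a0 + snd e1 + r * - snd e1)) in *.
    set (B := (fst a0 + fst e1, snd a0 + snd e1)) in *.
    set (C := (fst a0 + fst e1 + r * fst e2, snd a0 + snd e1 + r * snd e2)) in *.
    set (D := (fst a0 + fst e1 + - fst e1 + fst e2, snd a0 + snd e1 + - snd e1 + snd e2)) in *.
    assert (Hmem : pq A B C D <= M).
    { apply HM. exists A, B, C, D. split; [|reflexivity].
      split; [auto|]. split; [auto|]. split; [auto|]. split; [auto|]. split; [auto|]. split; [auto|].
      exists (1 - r), 1, (1 + r), 3. split; [lra|]. split; [lra|]. split; [lra|]. split; [lra|]. split; [lra|].
      unfold rhombus_path, quad_path, lerp, padd, A, B, C, D; cbn [fst snd].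
      split; [destruct (Rlt_dec (1 - r) 1); [|lra]; f_equal; ring|].
      split; [destruct (Rlt_dec 1 1); [lra|]; destruct (Rlt_dec 1 2); [|lra]; f_equal; ring|].
      split; [destruct (Rlt_dec (1 + r) 1); [lra|]; destruct (Rlt_dec (1 + r) 2); [|lra]; f_equal; ring|].
      destruct (Rlt_dec 3 1); [lra|]; destruct (Rlt_dec 3 2); [lra|]; destruct (Rlt_dec 3 3); [lra|]; f_equal; ring. }
    apply (Hfin (vnorm (- fst e1, - snd e1)) (vnorm (sub e2 (- fst e1, - snd e1)))); try lra.
    rewrite vnorm_sq. unfold sub; cbn [fst snd]. rewrite H4, Rabs_left by lra. rewrite F3.
    replace (vnorm (- fst e1, - snd e1) * vnorm (- fst e1, - snd e1)) with (vdot e1 e1)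
      by (change (vnorm (- fst e1, - snd e1)) with (vnorm (opp e1)); rewrite vnorm_opp; lra).
    replace ((fst e2 - - fst e1) ^ 2 + (snd e2 - - snd e1) ^ 2) with (vdot e1 e1 + vdot e2 e2 + 2 * vdot e1 e2)
        by (unfold vdot; ring).
    rewrite F1. field. lra.
Qed.


Theorem mainTheorem5 (a e1 e2 : pt) (alpha : R) :
  vnorm e1 = vnorm e2 ->
  0 < vdet e1 e2 ->
  0 < alpha <= PI / 2 ->
  cos alpha = Rabs (vdot e1 e2) / (vnorm e1 * vnorm e2) ->
  is_lub (p_values (rhombus_path a e1 e2)) (1 / sin (alpha / 2)).
Proof.
  intros H1 H2 H3 H4. split.
  - apply upper; assumption.
  - apply least; assumption.
Qed.
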